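(* Let $\lambda,\mu,\rho,\mathsf D>0$, $X=[-\frac{\mu\mathsf D}{2\lambda},\frac{\mu\mathsf D}{2\lambda}]$, and let $\hat f=\hat f_0$, i.e. $\hat f(x,y)=f(x,\hat y)$. 1. For $f=F_{0,0,\lambda,\mu,0}$ (i.e. $f(x,y)=-\frac{\lambda x^2}2+\mu xy$) and $Y=[-\frac12\mathsf D,\frac12\mathsf D]$, there exist $\hat y\in Y$ and $x^*\in X$ such that $\hat\varphi_{2\lambda}'(x^* )=0$ while $|\varphi_{2\lambda}'(x^* )|\ge\frac{\mu\mathsf D}{2}$. 2. If $\mu\ge\sqrt{2\lambda\rho/\mathsf D}$, then for $f=S_{\lambda,\rho,\mathsf D}$ and $Y=[0,\mathsf D]$ there exist $\hat y\in Y$ and $x^*\in X$ such that $\hat\varphi_{2\lambda}'(x^* )=0$ while $|\varphi_{2\lambda}'(x^* )|\ge\frac{\sqrt{\lambda\rho\mathsf D}}{3}$.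
   Context: For $k\in\mathbb N\cup\{0\}$, $s\in\{\pm1,0\}$, $\lambda>0$, $\mu\ge0$, $\rho\ge0$: $F_{k,s,\lambda,\mu,\rho}(x,y)=-\frac{\lambda x^2}{2}+\mu xy+\frac{s\rho|y|^{k+1}}{(k+1)!}$ on $\mathbb R\times\mathbb R$. Also $S_{\lambda,\rho,\mathsf D}(x,y)=-\frac{\lambda x^2}{4}+\frac{\rho y}{2}\big(\tanh\big(\sqrt{\tfrac{\lambda}{\rho\mathsf D}}\,x\big)-1\big)$. Given $f$, $X,Y\subseteq\mathbb R$ and $\hat y\in Y$: $\varphi(x)=\max_{y\in Y}f(x,y)$, $\hat\varphi(x)=\max_{y\in Y}\hat f(x,y)$, and for a function $\phi$ on $X$, $\phi_{2\lambda}(x)=\min_{u\in X}\{\phi(u)+\lambda(u-x)^2\}$ (Moreau envelope with parameter $2\lambda$); $'$ denotes the derivative in $x$. *)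

(* Defs.v *)
From HB Require Import structures.
From mathcomp Require Import all_boot all_order all_algebra.
From mathcomp Require Import all_classical all_reals all_analysis.
Set Implicit Arguments. Unset Strict Implicit. Unset Printing Implicit Defensive.
Import Order.TTheory GRing.Theory Num.Theory.
Import numFieldNormedType.Exports.
Local Open Scope classical_set_scope.
Local Open Scope ring_scope.

Section Defs.
Variable R : realType.

Definition tanh (x : R) : R := (expR x - expR (- x)) / (expR x + expR (- x)).

Definition Ffun (k : nat) (s lam mu rho : R) (x y : R) : R :=
  - (lam * x ^+ 2) / 2 + mu * x * y + s * rho * `|y| ^+ k.+1 / (k.+1)`!%:R.

Definition Sfun (lam rho D : R) (x y : R) : R :=
  - (lam * x ^+ 2) / 4 + rho * y / 2 * (tanh (Num.sqrt (lam / (rho * D)) * x) - 1).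

(* varphi(x) = max_{y in Y} f(x,y)  (the max is attained in all uses; written as sup) *)
Definition phi (f : R -> R -> R) (Y : set R) (x : R) : R :=
  sup [set f x y | y in Y].

Definition phihat (f : R -> R -> R) (yh : R) (Y : set R) (x : R) : R :=
  sup [set f x yh | y in Y].

(* Moreau envelope with parameter 2 lam: phi_{2lam}(x) = min_{u in X} phi(u) + lam (u-x)^2 *)
Definition moreau (ph : R -> R) (lam : R) (X : set R) (x : R) : R :=
  inf [set ph u + lam * (u - x) ^+ 2 | u in X].

Definition cint (a b : R) : set R := [set x | a <= x <= b].

End Defs.

(* Main.v *)
Require Import Defs.
From HB Require Import structures.
From mathcomp Require Import all_boot all_order all_algebra.
From mathcomp Require Import all_classical all_reals all_analysis.
Import Order.TTheory GRing.Theory Num.Theory.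
Import numFieldNormedType.Exports.
Local Open Scope classical_set_scope.
Local Open Scope ring_scope.
From mathcomp Require Import ring lra.

Lemma deriv_bound (R : realType) (f : R -> R) (x0 d K e : R) : 0 < e -> 0 <= K ->
  (forall x, `|x - x0| < e -> `|f x - f x0 - d * (x - x0)| <= K * (x - x0)^+2) ->
  is_derive x0 1 f d.
Proof.
move=> e0 K0 H.
have C : (fun h => h^-1 *: ((f \o shift x0) (h *: 1) - f x0)) @ 0^' --> d.
  apply/cvgrPdist_le => eps eps0.
  rewrite near_withinE /=; apply/nbhs_ballP.
  have K1 : 0 < K + 1 by lra.
  exists (Num.min e (eps / (K + 1))).
    by rewrite /= lt_min e0 divr_gt0.
  move=> h /= hb hn0.
  move: hb; rewrite /ball /= sub0r normrN lt_min => /andP [he heps].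
  have := H (h + x0); rewrite addrK => /(_ he).
  rewrite /= scaler1 /shift /= => Hh.
  have hN : 0 < `|h| by rewrite normr_gt0.
  have -> : d - h^-1 * (f (h + x0) - f x0) = - h^-1 * (f (h + x0) - f x0 - d * h).
    by field.
  rewrite normrM normrN normfV ler_pdivrMl //.
  apply: (le_trans Hh).
  rewrite -(real_normK (num_real h)) expr2 mulrA.
  rewrite ltr_pdivlMr // in heps.
  have hK : K * `|h| <= eps by nra.
  rewrite [K * _]mulrC -mulrA ler_pM2l //.

split; first by apply/cvg_ex; exists d.
exact: cvg_lim.
Qed.

Section T.
Variable R : realType.

Lemma expNder (x : R) : is_derive x 1 (fun y => expR (- y)) (- expR (- x)).
Proof.
have H : is_derive x 1 (expR \o (fun y : R => - y)) (expR (- x) * -1).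
  apply: is_derive1_comp.
rewrite mulrN1 in H; exact: H.
Qed.

Lemma tanh_lt1 (z : R) : `|tanh z| < 1.
Proof.
rewrite /tanh; have a := expR_gt0 z; have b := expR_gt0 (- z).
rewrite normrM normfV ltr_pdivrMr ?normr_gt0; last by lra.
rewrite mul1r (gtr0_norm (_ : 0 < expR z + expR (- z))); last by lra.
rewrite ltr_norml; apply/andP; split; lra.
Qed.

Lemma tanh_der (z : R) : is_derive z 1 (@tanh R) (1 - tanh z ^+ 2).
Proof.
have a := expR_gt0 z; have b := expR_gt0 (- z).
have hn : expR z + expR (- z) != 0 by apply/negP => /eqP; lra.
have D1 := is_deriveB (is_derive_expR z) (expNder z).
have D2 := is_deriveD (is_derive_expR z) (expNder z).
rewrite opprK in D1.
have D3 := @is_deriveV R (expR + (fun y => expR (- y))) z _ 1 hn D2.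
have D4 := is_deriveM D1 D3.
have E : @tanh R = (expR - (fun y => expR (- y))) * (fun y => ((expR + (fun y => expR (- y))) y)^-1).
  by apply/funext => y; rewrite /tanh.
rewrite {1}E.
eapply is_derive_eq; [exact D4|].
rewrite /tanh.
set A := expR z; set B := expR (- z).
change ((A - B) * (- (A + B) ^- 2 * (A - B)) + (A + B)^-1 * (A + B) = 1 - ((A - B) / (A + B)) ^+ 2).
field; exact: hn.
Qed.

Lemma tanh_cont (a b : R) : {within `[a, b], continuous (@tanh R)}.
Proof.
apply: derivable_within_continuous => x _.
by case: (tanh_der x).
Qed.

Lemma tanh_mvt (w t : R) : exists c, `|c - t| <= `|w - t| /\ tanh w - tanh t = (1 - tanh c ^+ 2) * (w - t).
Proof.
case: (ltgtP w t) => [wt|tw|->]; last by exists t; rewrite !subrr mulr0.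
- have [c cI Hc] := MVT wt (fun x _ => tanh_der x) (tanh_cont w t).
  move: cI; rewrite in_itv /= => /andP[c1 c2].
  exists c; split.
    by rewrite !ltr0_norm ?subr_lt0 //; lra.
  have -> : tanh w - tanh t = - (tanh t - tanh w) by rewrite opprB.
  rewrite Hc /=; ring.
- have [c cI Hc] := MVT tw (fun x _ => tanh_der x) (tanh_cont t w).
  move: cI; rewrite in_itv /= => /andP[c1 c2].
  exists c; split.
    by rewrite !gtr0_norm ?subr_gt0 //; lra.
  exact: Hc.
Qed.

Lemma tanh_lip (w t : R) : `|tanh w - tanh t| <= `|w - t|.
Proof.
have [c [_ ->]] := tanh_mvt w t.
rewrite normrM ler_piMl //.
have := tanh_lt1 c; rewrite -(real_normK (num_real (tanh c))).
set q := `|tanh c| => hq.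
have q0 : 0 <= q by rewrite /q.
rewrite ger0_norm; nra.
Qed.

Lemma tanh_taylor (w t : R) :
  - ((1 + `|tanh t|) * (w - t) ^+ 2) <= tanh w - tanh t - (1 - tanh t ^+ 2) * (w - t).
Proof.
have [c [hc E]] := tanh_mvt w t.
rewrite E.
have h1 : `|tanh t - tanh c| <= `|w - t|.
  by apply: le_trans (tanh_lip t c) _; rewrite distrC.
have h2 : `|tanh t + tanh c| <= 1 + `|tanh t|.
  apply: le_trans (ler_normD _ _) _; have := tanh_lt1 c; lra.
move: h1 h2; generalize (tanh t) (tanh c) => p q h1 h2.
have -> : (1 - q ^+ 2) * (w - t) - (1 - p ^+ 2) * (w - t)
   = (p - q) * (p + q) * (w - t) by ring.
apply: le_trans (_ : - `|(p - q) * (p + q) * (w - t)| <= _);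
  last by move: (lexx `|(p - q) * (p + q) * (w - t)|); rewrite ler_norml => /andP[].
rewrite lerN2 !normrM.
rewrite -(real_normK (num_real (w - t))).
have := normr_ge0 (p - q); have := normr_ge0 (p + q);
have := normr_ge0 (w - t) => ??? .
rewrite expr2 mulrA ler_wpM2r //.
rewrite mulrC; apply: ler_pM => //.
Qed.

Lemma tau_bounds : 0 <= tanh (2^-1 : R) <= 3/5.
Proof.
rewrite /tanh.
have a := expR_gt0 (2^-1 : R); have b := expR_gt0 (- 2^-1 : R).
have m := expRxMexpNx_1 (2^-1 : R).
have e1 := expR_ge1Dx (- 2^-1 : R).
have e2 := expR_ge1Dx (2^-1 : R).
set E := expR _ in a m e1 e2 *; set F := expR _ in b m e1 e2 *.
have hE : E <= 2 by nra.
have hF : F <= 1 by nra.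
apply/andP; split.
  apply: divr_ge0; lra.
rewrite ler_pdivrMr; lra.
Qed.

Lemma sup_eq (S : set R) v : S v -> (forall s, S s -> s <= v) -> sup S = v.
Proof.
move=> Sv ub; apply/le_anti/andP; split.
  by apply: ge_sup; [exists v | exact: ub].
by apply: ub_le_sup => //; exists v => s /ub.
Qed.

Lemma inf_eq (S : set R) v : S v -> (forall s, S s -> v <= s) -> inf S = v.
Proof.
move=> Sv lb; apply/le_anti/andP; split.
  by apply: ge_inf => //; exists v => s /lb.
by apply: lb_le_inf; [exists v | exact: lb].
Qed.

Lemma moreau_eq (g : R -> R) lam (X : set R) x u0 : X u0 ->
  (forall u, X u -> g u0 + lam * (u0 - x) ^+ 2 <= g u + lam * (u - x) ^+ 2) ->
  moreau g lam X x = g u0 + lam * (u0 - x) ^+ 2.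
Proof.
move=> Xu0 H; apply: inf_eq; first by exists u0.
by move=> s [u Xu <-]; exact: H.
Qed.

Lemma moreau_le (g : R -> R) lam (X : set R) x u0 m : X u0 ->
  (forall u, X u -> m <= g u + lam * (u - x) ^+ 2) ->
  moreau g lam X x <= g u0 + lam * (u0 - x) ^+ 2.
Proof.
move=> Xu0 H; apply: ge_inf; last by exists u0.
by exists m => s [u Xu <-]; exact: H.
Qed.

Lemma moreau_ge (g : R -> R) lam (X : set R) x u0 m : X u0 ->
  (forall u, X u -> m <= g u + lam * (u - x) ^+ 2) ->
  m <= moreau g lam X x.
Proof.
move=> Xu0 H; apply: lb_le_inf; first by exists (g u0 + lam * (u0 - x) ^+ 2), u0.
by move=> s [u Xu <-]; exact: H.
Qed.

Lemma phihat_eq (f : R -> R -> R) yh (Y : set R) y0 x : Y y0 ->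
  phihat f yh Y x = f x yh.
Proof.
move=> Yy0; apply: sup_eq; first by exists y0.
by move=> s [y _ <-].
Qed.

Lemma key_alg (A s tau T h xs k q : R) : 0 < A -> 0 < s -> 0 < k -> q <= 5/8 ->
  k * (1 - tau ^+ 2) = A / 4 -> k * (1 + tau) = A * q -> s * xs = 2^-1 ->
  - ((1 + tau) * (s * h) ^+ 2) <= T - tau - (1 - tau ^+ 2) * (s * h) ->
  - (A * s ^+ 2 * (xs + h) ^+ 2) / 4 + k * (T - 1) + A * s ^+ 2 * h ^+ 2 >=
  - (A * s ^+ 2 * xs ^+ 2) / 4 + k * (tau - 1) + A * s ^+ 2 / 8 * h ^+ 2.
Proof.
move=> A0 s0 k0 q58 hk1 hk2 sx H.
have H2 := ler_wpM2l (ltW k0) H.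
have e1 : k * - ((1 + tau) * (s * h) ^+ 2) = - (A * q) * (s * h) ^+ 2.
  by rewrite -hk2; ring.
have e2 : k * (T - tau - (1 - tau ^+ 2) * (s * h)) = k * T - k * tau - A / 4 * (s * h).
  by rewrite -hk1; ring.
rewrite e1 e2 in H2.
have e3 : A * s ^+ 2 * xs * h = A * s * h / 2.
  by rewrite expr2 -!mulrA (mulrA s xs) sx; field.
have n1 : 0 <= A * s ^+ 2 * h ^+ 2 * (5/8 - q).
  apply: mulr_ge0; last lra.
  by apply: mulr_ge0; [apply: mulr_ge0; [lra| apply: sqr_ge0] | apply: sqr_ge0].
move: H2 e3 n1; rewrite !expr2; move=> H2 e3 n1.
lra.
Qed.

Lemma part1 (lam mu D : R) : 0 < lam -> 0 < mu -> 0 < D ->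
  (let f := Ffun 0 0 lam mu 0 in
   let X := cint (- (mu * D / (2 * lam))) (mu * D / (2 * lam)) in
   let Y := cint (- (D / 2)) (D / 2) in
   exists2 yh, Y yh &
   exists2 xs, X xs &
     is_derive xs 1 (moreau (phihat f yh Y) lam X) 0 /\
     exists2 d, is_derive xs 1 (moreau (phi f Y) lam X) d & mu * D / 2 <= `|d|).
Proof.
move=> l0 m0 D0 f X Y.
have hc : mu * D / 2 = lam * (mu * D / (2 * lam)) by field; lra.
move: hc; rewrite /X; set c := mu * D / (2 * lam) => hc.
have c0 : 0 < c by rewrite /c; apply: divr_gt0; nra.
have fE : forall u y, f u y = -(lam * u ^+ 2) / 2 + mu * u * y.
  by move=> u y; rewrite /f /Ffun !mul0r addr0.
have phiE : forall u, phi f Y u = -(lam * u ^+ 2) / 2 + lam * c * `|u|.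
  move=> u; apply: sup_eq.
    exists (if 0 <= u then D / 2 else - (D / 2)).
      by rewrite /Y /cint /=; case: ifP => _; apply/andP; split; lra.
    rewrite fE; case: ifP => u0.
      by rewrite ger0_norm // -hc; field.
    by rewrite ltr0_norm ?ltNge ?u0 // -hc; field.
  move=> s [y /andP[y1 y2] <-]; rewrite fE.
  have [u0|u0] := leP 0 u; [rewrite ger0_norm // | rewrite ltr0_norm //];
    rewrite -hc.
    have H : 0 <= mu * u * (D / 2 - y) by apply: mulr_ge0; [apply: mulr_ge0|]; lra.
    lra.
  have H : 0 <= mu * (- u) * (y + D / 2) by apply: mulr_ge0; [apply: mulr_ge0|]; lra.
  lra.
exists (D / 4).
  by rewrite /Y /cint /=; apply/andP; split; lra.
exists (c / 2).
  by rewrite /cint /=; apply/andP; split; lra.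
split.
  have phE : forall u, phihat f (D / 4) Y u = -(lam * u ^+ 2) / 2 + lam * c / 2 * u.
    move=> u; rewrite (@phihat_eq _ _ _ (D / 4)).
      rewrite fE; congr (_ + _).
      have -> : lam * c / 2 * u = mu * D / 2 / 2 * u by rewrite hc; field.
      by field.
    by rewrite /Y /cint /=; apply/andP; split; lra.
  have ME : forall x, `|x - c / 2| < c / 4 ->
      moreau (phihat f (D / 4) Y) lam (cint (- c) c) x = lam * (x ^+ 2 - (2 * x - c / 2) ^+ 2 / 2).
    move=> x; rewrite ltr_norml => /andP [h1 h2].
    rewrite (@moreau_eq _ _ _ _ (2 * x - c / 2)).
    - by rewrite phE; ring.
    - by rewrite /cint /=; apply/andP; split; lra.
    move=> u _; rewrite !phE.
    have := mulr_ge0 (ltW l0) (sqr_ge0 (u - (2 * x - c / 2))).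
    rewrite !expr2 => H; lra.
  apply: (@deriv_bound _ _ _ _ lam (c / 4)); [lra | lra |].
  move=> x hx; rewrite !ME //; last by rewrite subrr normr0; lra.
  rewrite mul0r subr0.
  have alg : forall y : R, lam * (y ^+ 2 - (2 * y - c / 2) ^+ 2 / 2) -
    lam * ((c / 2) ^+ 2 - (2 * (c / 2) - c / 2) ^+ 2 / 2)
    = - (lam * (y - c / 2) ^+ 2) by move=> y; field.
  rewrite alg.
  rewrite normrN ger0_norm //; apply: mulr_ge0; [lra | exact: sqr_ge0].
have M1 : forall x, 0 <= x <= c / 2 -> moreau (phi f Y) lam (cint (- c) c) x = lam * x ^+ 2.
  move=> x /andP [h1 h2].
  rewrite (@moreau_eq _ _ _ _ 0).
  - by rewrite phiE normr0; ring.
  - by rewrite /cint /=; apply/andP; split; lra.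
  move=> u _; rewrite !phiE normr0.
  have Q : 0 <= u ^+ 2 / 2 + c * `|u| - 2 * u * x.
    have [u0|u0] := leP 0 u; [rewrite ger0_norm // | rewrite ltr0_norm //]; nra.
  have := mulr_ge0 (ltW l0) Q.
  rewrite !expr2 => H; lra.
have M2 : forall x, c / 2 <= x <= c ->
    moreau (phi f Y) lam (cint (- c) c) x = lam * (x ^+ 2 - (2 * x - c) ^+ 2 / 2).
  move=> x /andP [h1 h2].
  rewrite (@moreau_eq _ _ _ _ (2 * x - c)).
  - by rewrite phiE ger0_norm; [ring | lra].
  - by rewrite /cint /=; apply/andP; split; lra.
  move=> u _; rewrite !phiE (ger0_norm (_ : 0 <= 2 * x - c)); last lra.
  have Q : 0 <= (u - (2 * x - c)) ^+ 2 / 2 + c * (`|u| - u).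
    apply: addr_ge0; first by apply: divr_ge0; [exact: sqr_ge0 | lra].
    apply: mulr_ge0; [lra | rewrite subr_ge0; exact: ler_norm].
  have := mulr_ge0 (ltW l0) Q.
  rewrite !expr2 => H; lra.
exists (lam * c); last by rewrite hc ger0_norm //; apply: mulr_ge0; lra.
apply: (@deriv_bound _ _ _ _ lam (c / 2)); [lra | lra |].
move=> x; rewrite ltr_norml => /andP [h1 h2].
rewrite (M1 (c / 2)); last by apply/andP; split; lra.
have [hx|hx] := leP x (c / 2).
  rewrite M1; last by apply/andP; split; lra.
  have -> : lam * x ^+ 2 - lam * (c / 2) ^+ 2 - lam * c * (x - c / 2) = lam * (x - c / 2) ^+ 2 by field.
  by rewrite ger0_norm //; apply: mulr_ge0; [lra | exact: sqr_ge0].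
rewrite M2; last by apply/andP; split; lra.
have -> : lam * (x ^+ 2 - (2 * x - c) ^+ 2 / 2) - lam * (c / 2) ^+ 2 - lam * c * (x - c / 2)
   = - (lam * (x - c / 2) ^+ 2) by field.
by rewrite normrN ger0_norm //; apply: mulr_ge0; [lra | exact: sqr_ge0].
Qed.

Lemma part2 (lam mu rho D : R) : 0 < lam -> 0 < mu -> 0 < rho -> 0 < D ->
  (Num.sqrt (2 * lam * rho / D) <= mu ->
   let f := Sfun lam rho D in
   let X := cint (- (mu * D / (2 * lam))) (mu * D / (2 * lam)) in
   let Y := cint 0 D in
   exists2 yh, Y yh &
   exists2 xs, X xs &
     is_derive xs 1 (moreau (phihat f yh Y) lam X) 0 /\
     exists2 d, is_derive xs 1 (moreau (phi f Y) lam X) d &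
       Num.sqrt (lam * rho * D) / 3 <= `|d|).
Proof.
move=> l0 m0 r0 D0 hmu f X Y.
have A0 : 0 < rho * D by apply: mulr_gt0.
have fE : forall u y, f u y =
    - (lam * u ^+ 2) / 4 + rho * y / 2 * (tanh (Num.sqrt (lam / (rho * D)) * u) - 1).
  by [].
set s := Num.sqrt (lam / (rho * D)) in fE.
have s0 : 0 < s by rewrite /s sqrtr_gt0; apply: divr_gt0.
have s2 : s ^+ 2 = lam / (rho * D) by rewrite /s sqr_sqrtr //; apply: divr_ge0; lra.
have hsq : Num.sqrt (lam * rho * D) = lam / s.
  have -> : lam * rho * D = (lam / s) ^+ 2.
    rewrite expr_div_n s2; field; apply/andP; split; lra.
  by rewrite sqrtr_sqr ger0_norm //; apply: divr_ge0; lra.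
have hlam : lam = rho * D * s ^+ 2 by rewrite s2; field; lra.
set q := Num.sqrt (2 * lam * rho / D) in hmu.
have q0 : 0 <= q by exact: sqrtr_ge0.
have q2 : q ^+ 2 = 2 * lam * rho / D.
  by rewrite /q sqr_sqrtr //; apply: divr_ge0; [apply: mulr_ge0; lra | lra].
clearbody s q.
move: (hmu); rewrite /X; set c := mu * D / (2 * lam) => _.
have c0 : 0 < c by rewrite /c; apply: divr_gt0; nra.
pose z := s * q * D / lam.
have z0 : 0 <= z by rewrite /z; apply: divr_ge0; [apply: mulr_ge0; [apply: mulr_ge0|] |]; lra.
have z2 : z ^+ 2 = 2.
  rewrite /z expr_div_n !exprMn s2 q2; field; apply/andP; split; lra.
have z43 : 4 / 3 < z by nra.
have sc : z / 2 <= s * c.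
  have -> : s * c = z / 2 + (mu - q) * (s * D / (2 * lam)) by rewrite /c /z; field; lra.
  rewrite lerDl; apply: mulr_ge0; first lra.
  by apply: divr_ge0; [apply: mulr_ge0 |]; lra.
set xs := (2 * s)^-1.
have sx : s * xs = 2^-1 by rewrite /xs; field; lra.
have xs0 : 0 < xs by rewrite /xs invr_gt0; lra.
have xsc : 4 * xs < 3 * c by nra.
have phiE : forall u, phi f Y u = - (lam * u ^+ 2) / 4.
  move=> u; apply: sup_eq.
    exists 0; first by rewrite /Y /cint /=; apply/andP; split; lra.
    by rewrite fE mulr0 !mul0r addr0.
  move=> r [y /andP [y1 y2] <-]; rewrite fE gerDl.
  apply: mulr_ge0_le0; first by apply: divr_ge0; [apply: mulr_ge0|]; lra.
  by have := tanh_lt1 (s * u); rewrite ltr_norml => /andP [_ ?]; lra.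
have [tau0 tau35] := andP (tau_bounds).
set tau := tanh (2^-1 : R) in tau0 tau35.
pose sig := 1 - tau ^+ 2.
have sig0 : 16 / 25 <= sig by rewrite /sig; nra.
have sig1 : sig <= 1 by rewrite /sig; nra.
exists (D / (2 * sig)).
  rewrite /Y /cint /=; apply/andP; split.
    by apply: divr_ge0; lra.
  by rewrite ler_pdivrMr; nra.
exists xs.
  by rewrite /cint /=; apply/andP; split; lra.
split.
  have phE : forall u, phihat f (D / (2 * sig)) Y u = f u (D / (2 * sig)).
    by move=> u; apply: (@phihat_eq _ _ _ 0); rewrite /Y /cint /=; apply/andP; split; lra.
  set yh := D / (2 * sig).
  have KEY : forall u, f xs yh + lam / 8 * (u - xs) ^+ 2 <= f u yh + lam * (u - xs) ^+ 2.
    move=> u.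
    have T := tanh_taylor (s * u) (2^-1).
    rewrite -/tau (ger0_norm tau0) in T.
    have E1 : s * u - 2^-1 = s * (u - xs) by rewrite mulrBr sx.
    rewrite E1 in T.
    have k0 : 0 < rho * yh / 2.
      by rewrite /yh; apply: divr_gt0; [apply: mulr_gt0; [|apply: divr_gt0] |]; lra.
    have q58 : (4 * (1 - tau))^-1 <= 5 / 8.
      by rewrite -div1r ler_pdivrMr; lra.
    have hk1 : rho * yh / 2 * (1 - tau ^+ 2) = rho * D / 4.
      rewrite /yh -/sig; field; lra.
    have hk2 : rho * yh / 2 * (1 + tau) = rho * D * (4 * (1 - tau))^-1.
      rewrite /yh /sig; field; apply/andP; split; apply/eqP; nra.
    have K := @key_alg (rho * D) s tau (tanh (s * u)) (u - xs) xs (rho * yh / 2) ((4 * (1 - tau))^-1) A0 s0 k0 q58 hk1 hk2 sx T.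
    move: K; rewrite (addrC xs) subrK => K.
    rewrite !fE sx -/tau hlam.
    move: K; rewrite !expr2 => K; lra.
  have M0 : moreau (phihat f yh Y) lam (cint (- c) c) xs = f xs yh.
    rewrite (@moreau_eq _ _ _ _ xs).
    - by rewrite phE subrr expr0n /= mulr0 addr0.
    - by rewrite /cint /=; apply/andP; split; lra.
    move=> u _; rewrite !phE subrr expr0n /= mulr0 addr0.
    have := KEY u; have := mulr_ge0 (ltW l0) (sqr_ge0 (u - xs)); lra.
  have LB : forall x u, f xs yh - 7 * lam * (x - xs) ^+ 2 <= phihat f yh Y u + lam * (u - x) ^+ 2.
    move=> x u; rewrite phE.
    have := KEY u; have := mulr_ge0 (ltW l0) (sqr_ge0 (u - xs - 8 * (x - xs))).
    rewrite !expr2 => H1 H2; lra.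
  apply: (@deriv_bound _ _ _ _ (7 * lam) 1); [lra | lra |].
  move=> x _; rewrite M0 mul0r subr0.
  have Xxs : cint (- c) c xs by rewrite /cint /=; apply/andP; split; lra.
  have U := @moreau_le (phihat f yh Y) lam _ x xs _ Xxs (fun u _ => LB x u).
  have L := @moreau_ge (phihat f yh Y) lam _ x xs _ Xxs (fun u _ => LB x u).
  rewrite phE in U.
  rewrite ler_norml; apply/andP; split; first lra.
  have := mulr_ge0 (ltW l0) (sqr_ge0 (x - xs)).
  have E2 : (xs - x) ^+ 2 = (x - xs) ^+ 2 by rewrite -sqrrN opprB.
  rewrite E2 in U; lra.
have ME : forall x, `|x - xs| < 3 * c / 4 - xs ->
    moreau (phi f Y) lam (cint (- c) c) x = - (lam * x ^+ 2) / 3.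
  move=> x; rewrite ltr_norml => /andP [h1 h2].
  rewrite (@moreau_eq _ _ _ _ (4 * x / 3)).
  - by rewrite phiE; field.
  - by rewrite /cint /=; apply/andP; split; lra.
  move=> u _; rewrite !phiE.
  have := mulr_ge0 (ltW l0) (sqr_ge0 (u - 4 * x / 3)).
  rewrite !expr2 => H; lra.
exists (- (2 / 3) * lam * xs).
  apply: (@deriv_bound _ _ _ _ lam (3 * c / 4 - xs)); [lra | lra |].
  move=> x hx; rewrite !ME //; last by rewrite subrr normr0; lra.
  have -> : - (lam * x ^+ 2) / 3 - - (lam * xs ^+ 2) / 3 - - (2 / 3) * lam * xs * (x - xs)
     = - (lam / 3 * (x - xs) ^+ 2) by field.
  rewrite normrN ger0_norm; last by apply: mulr_ge0; [lra | exact: sqr_ge0].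
  have := sqr_ge0 (x - xs); nra.
rewrite hsq ler0_norm; last by have := mulr_gt0 l0 xs0; lra.
rewrite /xs.
have -> : - (- (2 / 3) * lam * (2 * s)^-1) = lam / s / 3 by field; lra.
by [].
Qed.
End T.

Theorem proposition3 (R : realType) (lam mu rho D : R) :
  0 < lam -> 0 < mu -> 0 < rho -> 0 < D ->
  (* part 1 *)
  (let f := Ffun 0 0 lam mu 0 in
   let X := cint (- (mu * D / (2 * lam))) (mu * D / (2 * lam)) in
   let Y := cint (- (D / 2)) (D / 2) in
   exists2 yh, Y yh &
   exists2 xs, X xs &
     is_derive xs 1 (moreau (phihat f yh Y) lam X) 0 /\
     exists2 d, is_derive xs 1 (moreau (phi f Y) lam X) d & mu * D / 2 <= `|d|)
  /\
  (* part 2 *)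
  (Num.sqrt (2 * lam * rho / D) <= mu ->
   let f := Sfun lam rho D in
   let X := cint (- (mu * D / (2 * lam))) (mu * D / (2 * lam)) in
   let Y := cint 0 D in
   exists2 yh, Y yh &
   exists2 xs, X xs &
     is_derive xs 1 (moreau (phihat f yh Y) lam X) 0 /\
     exists2 d, is_derive xs 1 (moreau (phi f Y) lam X) d &
       Num.sqrt (lam * rho * D) / 3 <= `|d|).
Proof.
move=> l0 m0 r0 D0; split.
  exact: part1.
exact: part2.
Qed.
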